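(* Let $\vec k$ be a vector of positive integers with $\ell(\vec k)=1$ or $\ell(\vec k)=2$. Then $\mathrm{depth}(\pi)=\mathrm{bounce}(\pi)$ for every $\pi\in\mathcal D_{\vec k}$. In particular, $$\sum_{\pi\in\mathcal D_{\vec k}}q^{\mathrm{area}(\pi)}t^{\mathrm{depth}(\pi)}=\sum_{\pi\in\mathcal D_{\vec k}}q^{\mathrm{area}(\pi)}t^{\mathrm{bounce}(\pi)}.$$
   Context: For $\vec k=(k_1,\dots,k_\ell)$ put $|\vec k|=\sum k_i$, $N=|\vec k|+\ell$. A $\vec k$-Dyck path is a word $\pi=\pi_1\cdots\pi_N$ containing the letters $S^{k_1},\dots,S^{k_\ell}$ exactly once each and in this order, together with $|\vec k|$ letters $W$, such that all starting ranks are nonnegative, where $r_1=0$, $r_{i+1}=r_i+k_j$ if $\pi_i=S^{k_j}$ and $r_{i+1}=r_i-1$ if $\pi_i=W$. $\mathcal D_{\vec k}$ is the set of such paths. $\mathrm{area}(\pi)=\sum_j a_j$ where $a_j$ is the starting rank of $S^{k_j}$. Filling algorithms: in a tableau of $\ell$ top-justified columns, column $i$ having $k_i+1$ cells, place $1$ at the top of column 1; for $i=2,\dots,N$, call an entry active if it is currently the bottom entry of a column $i'$ not yet containing $k_{i'}+1$ entries; if $\pi_i=W$ place $i$ immediately below the smallest active entry (algorithm $\eta$) resp. the largest active entry (algorithm $\eta_*$); otherwise place $i$ at the top of the first empty column. Ranking: for a filled tableau $F$, column 1 gets ranks $0,\dots,k_1$ top to bottom; for $i\ge2$, if the top entry of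 column $i$ of $F$ is $A+1$ and $A$ has rank $\alpha$, column $i$ gets ranks $\alpha,\dots,\alpha+k_i$ top to bottom. $\mathrm{bounce}(\pi)$ is the sum of the first-row ranks for $F=\eta(\pi)$, and $\mathrm{depth}(\pi)$ is the sum of the first-row ranks for $F=\eta_*(\pi)$. *)

(* Defs.v *)
From mathcomp Require Import all_boot all_order all_algebra.
Set Implicit Arguments. Unset Strict Implicit. Unset Printing Implicit Defensive.
Import GRing.Theory Num.Theory.

(* A word pi = pi_1 ... pi_N is encoded as a seq bool: [true] at position i
   means pi_i is the next (in order) letter S^{k_j}, [false] means W.
   Since the S^{k_j} occur exactly once each and in the order j = 1..l,
   the word is determined by the positions of its S letters. *)

Fixpoint start_ranks_from (k : seq nat) (r : int) (w : seq bool) : seq int :=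
  match w with
  | [::] => [::]
  | b :: w' =>
      if b then r :: start_ranks_from (behead k) (r + (head 0%N k)%:Z) w'
      else r :: start_ranks_from k (r - 1) w'
  end.

Definition start_ranks (k : seq nat) (w : seq bool) : seq int :=
  start_ranks_from k 0 w.

Definition is_kdyck (k : seq nat) (w : seq bool) : bool :=
  [&& size w == (sumn k + size k)%N, count id w == size k
    & all (fun r : int => (0 <= r)%R) (start_ranks k w)].

Fixpoint words (n : nat) : seq (seq bool) :=
  if n is n'.+1 then [seq b :: w | b <- [:: true; false], w <- words n']
  else [:: [::]].

Definition kdyck_paths (k : seq nat) : seq (seq bool) :=
  [seq w <- words (sumn k + size k) | is_kdyck k w].

Definition area (k : seq nat) (w : seq bool) : nat :=
  sumn [seq absz p.1 | p <- zip (start_ranks k w) w & p.2].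

(* A tableau is a list of l columns, each listed top to bottom;
   column j has capacity k_j + 1. *)

Definition place_top (cols : seq (seq nat)) (i : nat) : seq (seq nat) :=
  set_nth [::] cols (find (fun c => c == [::]) cols) [:: i].

Definition active (k : seq nat) (cols : seq (seq nat)) : seq nat :=
  [seq last 0%N p.1 | p <- zip cols k & (p.1 != [::]) && (size p.1 < p.2.+1)].

Definition place_below (k : seq nat) (cols : seq (seq nat)) (a i : nat)
  : seq (seq nat) :=
  [seq (if [&& p.1 != [::], size p.1 < p.2.+1 & last 0%N p.1 == a]
        then rcons p.1 i else p.1) | p <- zip cols k].

Definition fill_step (choose : seq nat -> nat) (k : seq nat)
  (cols : seq (seq nat)) (ib : nat * bool) : seq (seq nat) :=
  let: (i, b) := ib in
  if i == 1%N then place_top cols 1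
  else if b then place_top cols i
  else match active k cols with
       | [::] => cols
       | act => place_below k cols (choose act) i
       end.

Definition fill (choose : seq nat -> nat) (k : seq nat) (w : seq bool)
  : seq (seq nat) :=
  foldl (fill_step choose k) (nseq (size k) [::]) (zip (iota 1 (size w)) w).

Definition min_seq (s : seq nat) : nat := foldr minn (head 0%N s) s.
Definition max_seq (s : seq nat) : nat := foldr maxn 0%N s.

Definition eta (k : seq nat) (w : seq bool) := fill min_seq k w.
Definition eta_star (k : seq nat) (w : seq bool) := fill max_seq k w.

(* rank of entry a, given the ranks [tops] of the top cells of the columns
   already ranked *)
Definition entry_rank (cols : seq (seq nat)) (tops : seq nat) (a : nat) : nat :=
  let c := find (fun col => a \in col) cols in
  (nth 0 tops c + index a (nth [::] cols c))%N.

Definition top_ranks (cols : seq (seq nat)) : seq nat :=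
  foldl (fun tops col =>
           rcons tops (if tops is [::] then 0%N
                       else entry_rank cols tops (head 0%N col).-1))
        [::] cols.

Definition first_row_rank_sum (F : seq (seq nat)) : nat := sumn (top_ranks F).

Definition bounce (k : seq nat) (w : seq bool) : nat :=
  first_row_rank_sum (eta k w).
Definition depth (k : seq nat) (w : seq bool) : nat :=
  first_row_rank_sum (eta_star k w).

(* Main.v *)
Require Import Defs.
From mathcomp Require Import all_boot all_order all_algebra.
From mathcomp Require Import zify.
Import GRing.Theory.

Lemma count0 (s : seq bool) : count id s = 0 -> s = nseq (size s) false.
Proof. elim: s => [|b s IH] //=; case: b => //= h; by rewrite -IH. Qed.

Lemma count1 (s : seq bool) : count id s = 1 ->
  exists a b, s = nseq a false ++ true :: nseq b false.
Proof.
elim: s => [|b s IH] //=; case: b => /= h.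
- have h0 : count id s = 0 by case: h.
  exists 0, (size s); by rewrite /= {1}(count0 s h0).
- have [a [b' ->]] := IH h; by exists a.+1, b'.
Qed.

Lemma zipW m n (t : seq bool) : zip (iota m (n + size t)) (nseq n false ++ t) =
  [seq (j, false) | j <- iota m n] ++ zip (iota (m + n) (size t)) t.
Proof.
elim: n m => [|n IH] m /=; first by rewrite addn0.
by rewrite IH addSnnS.
Qed.

Lemma zipW0 m n : zip (iota m n) (nseq n false) = [seq (j, false) | j <- iota m n].
Proof. elim: n m => [|n IH] m //=; by rewrite IH. Qed.

Lemma step_W1 ch k1 k2 c j : (forall x, ch [:: x] = x) -> j != 1 -> c != [::] ->
  fill_step ch [:: k1; k2] [:: c; [::]] (j, false) =
  [:: (if size c < k1.+1 then rcons c j else c); [::]].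
Proof.
move=> hch hj hc; rewrite /fill_step (negbTE hj) /active /=.
case: ifP; rewrite hc /= => h; last by rewrite h.
by rewrite h /place_below /= hch hc h eqxx.
Qed.

Lemma fill_W_2 ch1 ch2 k1 k2 js c :
  (forall x, ch1 [:: x] = x) -> (forall x, ch2 [:: x] = x) ->
  all (fun j => j != 1) js -> c != [::] ->
  foldl (fill_step ch1 [:: k1; k2]) [:: c; [::]] [seq (j, false) | j <- js] =
  foldl (fill_step ch2 [:: k1; k2]) [:: c; [::]] [seq (j, false) | j <- js]
  /\ exists x, foldl (fill_step ch1 [:: k1; k2]) [:: c; [::]]
                 [seq (j, false) | j <- js] = [:: c ++ x; [::]].
Proof.
move=> h1 h2; elim: js c => [|j js IH] c; first by move=> _ _; split=> //; exists [::]; rewrite cats0.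
case/andP => hj hjs hc.
have E : forall ch, foldl (fill_step ch [::k1;k2]) [:: c;[::]] [seq (j0,false) | j0 <- j :: js] = foldl (fill_step ch [::k1;k2]) (fill_step ch [::k1;k2] [:: c;[::]] (j,false)) [seq (j0,false) | j0 <- js] by [].
rewrite !E !step_W1 //.
set c' := (if _ then _ else _).
have hc' : c' != [::] by rewrite /c'; case: ifP => // _; case: (c) hc.
have [-> [x ->]] := IH c' hjs hc'; split=> //.
rewrite /c'; case: ifP => _; last by exists x.
by exists (j :: x); rewrite -cats1 -catA.
Qed.

Lemma fill_W_3 ch k1 k2 i js c x y :
  0 < i -> all (fun j => i < j) js -> i.-1 \notin x -> i.-1 \notin y ->
  exists x' y', foldl (fill_step ch [:: k1; k2]) [:: c ++ x; i :: y]
     [seq (j, false) | j <- js] = [:: c ++ x'; i :: y'] /\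
     i.-1 \notin x' /\ i.-1 \notin y'.
Proof.
move=> hi; elim: js x y => [|j js IH] x y /=; first by move=> _ hx hy; exists x, y.
move=> /andP[hj hjs] hx hy.
have hj1 : j != 1 by rewrite neq_ltn; apply/orP; right; exact: leq_ltn_trans hi hj.
have hnj : i.-1 != j by rewrite neq_ltn; apply/orP; left; 
  apply: leq_ltn_trans hj; rewrite leq_pred.
have hrx : i.-1 \notin rcons x j by rewrite mem_rcons in_cons negb_or hnj.
have hry : i.-1 \notin rcons y j by rewrite mem_rcons in_cons negb_or hnj.
rewrite /fill_step (negbTE hj1).
case: (active _ _) => [|a act]; first exact: IH.
rewrite /place_below /=.
case: ifP => _; case: ifP => _;
  rewrite ?rcons_cat /=; apply: IH => //.
Qed.

Lemma frrs2 c x i y : 1 < i -> i.-1 \notin x -> i.-1 \notin y ->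
  first_row_rank_sum [:: c ++ x; i :: y] =
  (if i.-1 \in c then index i.-1 c else 0).
Proof.
move=> hi hx hy; rewrite /first_row_rank_sum /top_ranks /= /entry_rank /=.
have hni : (i.-1 == i) = false by apply/eqP; lia.
rewrite mem_cat (negbTE hx) orbF in_cons hni (negbTE hy) /=.
case: ifP => h /=; last by [].
by rewrite index_cat h add0n addn0.
Qed.

Lemma size2 ch1 ch2 k1 k2 a b :
  (forall x, ch1 [:: x] = x) -> (forall x, ch2 [:: x] = x) ->
  let w := true :: nseq a false ++ true :: nseq b false in
  first_row_rank_sum (fill ch1 [:: k1; k2] w) =
  first_row_rank_sum (fill ch2 [:: k1; k2] w).
Proof.
move=> hch1 hch2 w.
have Z : zip (iota 1 (size w)) w = (1,true) :: [seq (j,false) | j <- iota 2 a] ++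
   (2+a, true) :: [seq (j,false) | j <- iota (2+a).+1 b].
  by rewrite /w /= size_cat size_nseq zipW /= size_nseq zipW0.
have FC : forall (f : seq (seq nat) -> nat * bool -> seq (seq nat)) z x s,
  foldl f z (x :: s) = foldl f (f z x) s by [].
rewrite /fill Z !FC !foldl_cat !FC.
have F1 : forall ch, fill_step ch [::k1;k2] (nseq (size [::k1;k2]) [::]) (1,true) = [:: [::1]; [::]] by [].
rewrite !F1.
have hall : all (fun j => j != 1) (iota 2 a).
  apply/allP => j; rewrite mem_iota => /andP[h _]; by rewrite neq_ltn h orbT.
have [E [x Ex]] := @fill_W_2 ch1 ch2 k1 k2 (iota 2 a) [::1] hch1 hch2 hall isT.
rewrite -E Ex.
have F2 : forall ch, fill_step ch [:: k1; k2] [:: [:: 1] ++ x; [::]] (2 + a, true) = [:: [:: 1] ++ x; [:: 2+a]].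
  by move=> ch; rewrite /fill_step /place_top /= addnC addn2.
rewrite !F2.
have hall2 : all (fun j => (2 + a) < j) (iota (2 + a).+1 b).
  by apply/allP => j; rewrite mem_iota => /andP[h _].
have := @fill_W_3 ch1 k1 k2 (2 + a) (iota (2 + a).+1 b) (1 :: x) [::] [::]
   isT hall2 isT isT.
have := @fill_W_3 ch2 k1 k2 (2 + a) (iota (2 + a).+1 b) (1 :: x) [::] [::]
   isT hall2 isT isT.
rewrite !cats0 => -[x1 [y1 [-> [h1 h1']]]] [x2 [y2 [-> [h2 h2']]]].
by rewrite !frrs2.
Qed.

Lemma FCg (f : seq (seq nat) -> nat * bool -> seq (seq nat)) z x s :
  foldl f z (x :: s) = foldl f (f z x) s.
Proof. by []. Qed.

Lemma size1 ch k1 b : first_row_rank_sum (fill ch [:: k1] (true :: nseq b false)) = 0.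
Proof.
have Z : zip (iota 1 (size (true :: nseq b false))) (true :: nseq b false) =
  (1,true) :: [seq (j,false) | j <- iota 2 b] by rewrite /= size_nseq zipW0.
rewrite /fill Z FCg.
have F1 : fill_step ch [::k1] (nseq (size [:: k1]) [::]) (1,true) = [:: [::1]] by [].
rewrite F1.
suff H : forall js C, all (fun j => j != 1) js -> exists C',
    foldl (fill_step ch [::k1]) [:: C] [seq (j,false) | j <- js] = [:: C'].
  have [|C' ->] := H (iota 2 b) [::1]; last by [].
  apply/allP => j; rewrite mem_iota => /andP[h _]; by rewrite neq_ltn h orbT.
elim=> [|j js IH] C; first by exists C.
case/andP => hj hjs; rewrite FCg /fill_step (negbTE hj).
case: (active _ _) => [|x xs]; first exact: IH.
rewrite /place_below /=; exact: IH.
Qed.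

Theorem proposition5p5 (k : seq nat) :
  all (fun x => 0 < x) k -> (size k == 1) || (size k == 2) ->
  (forall w : seq bool, is_kdyck k w -> depth k w = bounce k w) /\
  (forall (R : comNzRingType) (q t : R),
     (\sum_(w <- kdyck_paths k) q ^+ area k w * t ^+ depth k w =
      \sum_(w <- kdyck_paths k) q ^+ area k w * t ^+ bounce k w)%R).
Proof.
move=> kpos hsz.
have P1 : forall w, is_kdyck k w -> depth k w = bounce k w.
  move=> w /and3P[hs hc hr].
  have hmin : forall x, min_seq [:: x] = x by move=> x; rewrite /min_seq /= minnn.
  have hmax : forall x, max_seq [:: x] = x by move=> x; rewrite /max_seq /= maxn0.
  case: w hs hc hr => [|b0 w1].
    by case: k kpos hsz => [|k1 [|k2 k']].
  case: b0 => hs hc hr; last first.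
    case: w1 hs hc hr => [|b1 w2] hs hc hr.
      move: kpos hsz hs hc hr; case: k => [|k1 [|k2 [|k3 k']]] //=;
        rewrite ?andbT => h _ /eqP; lia.
    by move: hr; rewrite /start_ranks /=; case: (b1).
  move: kpos hsz hc hs hr; case: k => [|k1 [|k2 [|k3 k']]] //= _ _ hc _ _; move: hc.
    move=> /eqP [] /count0 ->.
    by rewrite /depth /bounce /eta /eta_star !size1.
  move=> /eqP [] /count1 [a [b ->]].
  rewrite /depth /bounce /eta /eta_star; exact: size2.
split=> // R q t.
apply: eq_big_seq => w; rewrite mem_filter => /andP[hw _].
by rewrite P1.
Qed.
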